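(* Let $\Gamma$ be a countably infinite residually finite group and $\{\Gamma_n\}_{n\in\mathbb N}$ a strictly decreasing sequence of finite-index normal subgroups with $\bigcap_n\Gamma_n=\{e_\Gamma\}$. Let $X=\varprojlim\Gamma/\Gamma_n$ with left translation action of $\Gamma\subseteq X$ and quotient maps $\pi_n:X\to\Gamma/\Gamma_n$. For each $n\ge2$ pick $\gamma_n\in\Gamma_{n-1}\setminus\Gamma_n$ and set $C_n=\pi_n^{-1}(\gamma_n\Gamma_n)$. Put $X_+=\bigcup_{n\ge2}C_n$ and $X_-=X\setminus(X_+\cup\{e_\Gamma\})$. Then every independence set $M\subseteq\Gamma$ for $(X_+,X_-)$ has cardinality at most $5$.
   Context: $X=\varprojlim\Gamma/\Gamma_n$ is the set of $(x_n)\in\prod_n\Gamma/\Gamma_n$ compatible under the natural maps $\Gamma/\Gamma_{n+1}\to\Gamma/\Gamma_n$, a compact metrizable group containing $\Gamma$ as a dense subgroup. A set $M\subseteq\Gamma$ is an independence set for $(A_1,A_2)$ if $\bigcap_{s\in F}s^{-1}A_{\omega(s)}\ne\emptyset$ for every nonempty finite $F\subseteq M$ and every $\omega\in\{1,2\}^F$. *)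

(* Defs.v *)
From Stdlib Require Import List.
Import ListNotations.
Set Implicit Arguments.

Record Group := {
  carrier :> Type;
  gmul : carrier -> carrier -> carrier;
  ginv : carrier -> carrier;
  gone : carrier;
  gmulA : forall a b c, gmul a (gmul b c) = gmul (gmul a b) c;
  gmul1l : forall a, gmul gone a = a;
  gmulVl : forall a, gmul (ginv a) a = gone
}.

Section Defs.
Variable G : Group.

Definition countably_infinite : Prop :=
  exists f : nat -> G, (forall m n, f m = f n -> m = n) /\ (forall g, exists n, f n = g).

Definition subgroup (H : G -> Prop) : Prop :=
  H (gone G) /\ (forall a b, H a -> H b -> H (gmul G a b)) /\ (forall a, H a -> H (ginv G a)).

Definition normal_subgroup (H : G -> Prop) : Prop :=
  subgroup H /\ forall g h, H h -> H (gmul G (gmul G g h) (ginv G g)).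

Definition finite_index (H : G -> Prop) : Prop :=
  exists l : list G, forall g, exists r, In r l /\ H (gmul G (ginv G r) g).

Definition residually_finite : Prop :=
  forall g, g <> gone G ->
    exists H, normal_subgroup H /\ finite_index H /\ ~ H g.

(* Points of X = inverse limit of G/Gam n, represented by sequences of
   coset representatives x n (of x n * Gam n) that are compatible. *)
Definition compatible (Gam : nat -> G -> Prop) (x : nat -> G) : Prop :=
  forall n, Gam n (gmul G (ginv G (x n)) (x (S n))).

Definition translate (s : G) (x : nat -> G) : nat -> G := fun n => gmul G s (x n).

Definition is_identity_pt (Gam : nat -> G -> Prop) (x : nat -> G) : Prop :=
  forall n, Gam n (x n).

(* Indexing: paper's Gamma_{k+1} is Gam k (paper's N = {1,2,...}); paper's
   gamma_{k+1} is gam k; paper's C_{k+1} (k+1 >= 2) is C k for k >= 1: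
   C_n = pi_n^{-1}(gamma_n Gamma_n). *)
Definition inC (Gam : nat -> G -> Prop) (gam : nat -> G) (k : nat) (x : nat -> G) : Prop :=
  Gam k (gmul G (ginv G (gam k)) (x k)).

Definition Xplus Gam gam (x : nat -> G) : Prop :=
  exists k, 1 <= k /\ inC Gam gam k x.

Definition Xminus Gam gam (x : nat -> G) : Prop :=
  ~ Xplus Gam gam x /\ ~ is_identity_pt Gam x.

(* M is an independence set for (A1, A2) (sets of points of X):
   for every nonempty finite F ⊆ M and every omega : F -> {1,2}
   (true = 1, false = 2), the intersection over s in F of s^{-1} A_{omega s}
   is nonempty. *)
Definition independence_set Gam (A1 A2 : (nat -> G) -> Prop) (M : G -> Prop) : Prop :=
  forall (F : list G) (omega : G -> bool),
    F <> [] -> (forall s, In s F -> M s) ->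
    exists x, compatible Gam x /\
      forall s, In s F ->
        (if omega s then A1 (translate s x) else A2 (translate s x)).

Definition card_le (M : G -> Prop) (n : nat) : Prop :=
  forall l : list G, NoDup l -> (forall s, In s l -> M s) -> length l <= n.

End Defs.

Arguments subgroup {G} H.
Arguments normal_subgroup {G} H.
Arguments finite_index {G} H.
Arguments compatible {G} Gam x.
Arguments translate {G} s x.
Arguments is_identity_pt {G} Gam x.
Arguments inC {G} Gam gam k x.
Arguments Xplus {G} Gam gam x.
Arguments Xminus {G} Gam gam x.
Arguments independence_set {G} Gam A1 A2 M.
Arguments card_le {G} M n.

(* Main.v *)
Require Import Defs.
From Stdlib Require Import List Arith Lia Classical ClassicalEpsilon.
Import ListNotations.

Lemma mulVr (G : Group) (a : G) : gmul G a (ginv G a) = gone G.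
Proof.
  assert (H : gmul G a (ginv G a) =
    gmul G (gmul G (ginv G (ginv G a)) (ginv G a)) (gmul G a (ginv G a))).
  { rewrite gmulVl, gmul1l. reflexivity. }
  rewrite H. rewrite <- gmulA. rewrite (gmulA G (ginv G a) a).
  rewrite gmulVl, gmul1l. apply gmulVl.
Qed.

Lemma mulr1 (G : Group) (a : G) : gmul G a (gone G) = a.
Proof. rewrite <- (gmulVl G a), gmulA, mulVr, gmul1l. reflexivity. Qed.

Lemma inv_uniq (G : Group) (y z : G) : gmul G y z = gone G -> y = ginv G z.
Proof.
  intro H. rewrite <- (mulr1 G y), <- (mulVr G z), gmulA, H, gmul1l. reflexivity.
Qed.

Lemma inv_inv (G : Group) (a : G) : ginv G (ginv G a) = a.
Proof. symmetry. apply inv_uniq. apply mulVr. Qed.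

Lemma inv_mul (G : Group) (a b : G) : ginv G (gmul G a b) = gmul G (ginv G b) (ginv G a).
Proof.
  symmetry. apply inv_uniq. rewrite <- gmulA, (gmulA G (ginv G a) a), gmulVl, gmul1l.
  apply gmulVl.
Qed.

Lemma eq_of_mulV (G : Group) (a b : G) : gmul G a (ginv G b) = gone G -> a = b.
Proof. intro H. apply inv_uniq in H. rewrite inv_inv in H. exact H. Qed.

Definition E (G : Group) (Gam : nat -> G -> Prop) n (g h : G) := Gam n (gmul G (ginv G g) h).

Lemma E_refl (G : Group) (Gam : nat -> G -> Prop) (HN : forall n, normal_subgroup (Gam n)) n g : E G Gam n g g.
Proof. unfold E. rewrite gmulVl. apply (HN n). Qed.

Lemma E_sym (G : Group) (Gam : nat -> G -> Prop) (HN : forall n, normal_subgroup (Gam n)) n g h :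
  E G Gam n g h -> E G Gam n h g.
Proof.
  unfold E. intro H. destruct (HN n) as [[_ [_ Hi]] _].
  apply Hi in H. rewrite inv_mul, inv_inv in H. exact H.
Qed.

Lemma E_trans (G : Group) (Gam : nat -> G -> Prop) (HN : forall n, normal_subgroup (Gam n)) n g h k :
  E G Gam n g h -> E G Gam n h k -> E G Gam n g k.
Proof.
  unfold E. intros H1 H2. destruct (HN n) as [[_ [Hm _]] _].
  pose proof (Hm _ _ H1 H2) as H. rewrite <- gmulA, (gmulA G h), mulVr, gmul1l in H. exact H.
Qed.

Lemma Gam_mono (G : Group) (Gam : nat -> G -> Prop) (Hdec : forall n g, Gam (S n) g -> Gam n g) n n' g :
  n <= n' -> Gam n' g -> Gam n g.
Proof. induction 1; auto. Qed.

Lemma E_mono (G : Group) (Gam : nat -> G -> Prop) (Hdec : forall n g, Gam (S n) g -> Gam n g) n n' g h :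
  n <= n' -> E G Gam n' g h -> E G Gam n g h.
Proof. unfold E. apply Gam_mono; auto. Qed.

Lemma E_rmul (G : Group) (Gam : nat -> G -> Prop) (HN : forall n, normal_subgroup (Gam n)) n g h u :
  E G Gam n g h -> E G Gam n (gmul G g u) (gmul G h u).
Proof.
  unfold E. intro H. destruct (HN n) as [_ Hc].
  pose proof (Hc (ginv G u) _ H) as H'. rewrite inv_inv in H'.
  rewrite inv_mul. rewrite !gmulA in *. exact H'.
Qed.

Lemma E_rmul_inv (G : Group) (Gam : nat -> G -> Prop) (HN : forall n, normal_subgroup (Gam n)) n g h u :
  E G Gam n (gmul G g u) (gmul G h u) -> E G Gam n g h.
Proof.
  intro H. apply (E_rmul G Gam HN n _ _ (ginv G u)) in H.
  rewrite <- !gmulA, mulVr, !mulr1 in H. exact H.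
Qed.

Lemma E_mul_in' (G : Group) (Gam : nat -> G -> Prop) n g u : E G Gam n g (gmul G g u) -> Gam n u.
Proof. unfold E. rewrite gmulA, gmulVl, gmul1l. auto. Qed.

Lemma E_mul_in (G : Group) (Gam : nat -> G -> Prop) n g u : Gam n u -> E G Gam n g (gmul G g u).
Proof. unfold E. rewrite gmulA, gmulVl, gmul1l. auto. Qed.

Lemma E_compat (G : Group) (Gam : nat -> G -> Prop) (HN : forall n, normal_subgroup (Gam n))
  (Hdec : forall n g, Gam (S n) g -> Gam n g) (x : nat -> G) :
  compatible Gam x -> forall n n', n <= n' -> E G Gam n (x n) (x n').
Proof.
  intros Hc n n' Hle. induction Hle.
  - apply E_refl; auto.
  - eapply E_trans; eauto. apply (E_mono G Gam Hdec n m); [lia|]. apply Hc.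
Qed.

Lemma plus_iff (G : Group) Gam gam (s : G) x :
  Xplus Gam gam (translate s x) <-> exists k, 1 <= k /\ E G Gam k (gmul G (ginv G s) (gam k)) (x k).
Proof.
  unfold Xplus, inC, translate, E. split; intros [k [Hk H]]; exists k; split; auto;
  rewrite inv_mul, inv_inv, <- gmulA in *; auto.
Qed.

Lemma id_iff (G : Group) Gam (s : G) x :
  is_identity_pt Gam (translate s x) <-> forall n, E G Gam n (ginv G s) (x n).
Proof. unfold is_identity_pt, translate, E. rewrite inv_inv. tauto. Qed.

Lemma least_ex (P : nat -> Prop) : (exists n, P n) -> exists n, P n /\ forall k, k < n -> ~ P k.
Proof.
  intros [n Hn]. revert Hn. induction n as [n IH] using (well_founded_induction lt_wf).
  intro Hn. destruct (classic (exists k, k < n /\ P k)) as [[k [Hk Pk]]|H].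
  - exact (IH k Hk Pk).
  - exists n; split; auto. intros k Hk Pk; apply H; eauto.
Qed.

Lemma transfer (G : Group) Gam (HN : forall n, normal_subgroup (Gam n)) k (c c' g y : G) :
  E G Gam k c c' -> E G Gam k (gmul G c g) y -> E G Gam k (gmul G c' g) y.
Proof.
  intros H1 H2. eapply E_trans; [auto| |exact H2]. apply E_sym; auto. apply E_rmul; auto.
Qed.

Lemma plus_high (G : Group) Gam gam (HN : forall n, normal_subgroup (Gam n))
  (Hdec : forall n g, Gam (S n) g -> Gam n g)
  (Hgam : forall k, 1 <= k -> Gam (k - 1) (gam k) /\ ~ Gam k (gam k)) x m k (c : G) :
  compatible Gam x -> 1 <= k -> m < k -> E G Gam k (gmul G c (gam k)) (x k) -> E G Gam m c (x m).
Proof.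
  intros Hc Hk Hmk H.
  assert (H1 : E G Gam m (gmul G c (gam k)) (x k)) by (apply (E_mono G Gam Hdec m k); auto; lia).
  assert (H2 : E G Gam m (x m) (x k)) by (apply E_compat; auto; lia).
  assert (H3 : E G Gam m c (gmul G c (gam k))).
  { apply E_mul_in. apply (Gam_mono G Gam Hdec m (k-1)); [lia|]. apply Hgam; auto. }
  eapply E_trans; eauto. eapply E_trans; eauto. apply E_sym; auto.
Qed.

Lemma sign_lemma (G : Group) Gam gam (HN : forall n, normal_subgroup (Gam n))
  (Hdec : forall n g, Gam (S n) g -> Gam n g)
  (Hgam : forall k, 1 <= k -> Gam (k - 1) (gam k) /\ ~ Gam k (gam k)) x m (c d : G) :
  compatible Gam x -> (forall n, n < m -> E G Gam n c d) -> ~ E G Gam m c d ->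
  E G Gam m d (x m) ->
  ((exists k, 1 <= k /\ E G Gam k (gmul G c (gam k)) (x k)) <->
   (1 <= m /\ E G Gam m (gmul G c (gam m)) d)) /\ ~ (forall n, E G Gam n c (x n)).
Proof.
  intros Hc Hlow Hm Hd.
  assert (Hlow' : forall n, n < m -> E G Gam n c (x n)).
  { intros n Hn. apply (E_trans G Gam HN n c d). apply Hlow; auto.
    apply (E_trans G Gam HN n d (x m)). apply (E_mono G Gam Hdec n m); [lia|exact Hd].
    apply E_sym; auto. apply E_compat; auto; lia. }
  assert (Hm' : ~ E G Gam m c (x m)).
  { intro H. apply Hm. eapply E_trans; eauto. apply E_sym; auto. }
  split; [split|].
  - intros [k [Hk H]]. destruct (lt_eq_lt_dec k m) as [[Hlt|Heq]|Hgt].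
    + exfalso. apply (proj2 (Hgam k Hk)). apply (E_mul_in' G Gam k c).
      apply (E_trans G Gam HN k c (x k)); [apply Hlow'; auto| apply E_sym; auto].
    + subst k. split; auto. apply (E_trans G Gam HN m _ (x m)); auto. apply E_sym; auto.
    + exfalso. apply Hm'. eapply plus_high; eauto.
  - intros [Hm1 H]. exists m; split; auto. apply (E_trans G Gam HN m _ d); auto.
  - intro H. apply Hm', H.
Qed.

Definition dec (P : Prop) : bool := if excluded_middle_informative P then true else false.
Lemma dec_t (P : Prop) : P -> dec P = true.
Proof. unfold dec; destruct (excluded_middle_informative P); tauto. Qed.
Lemma dec_f (P : Prop) : ~ P -> dec P = false.
Proof. unfold dec; destruct (excluded_middle_informative P); tauto. Qed.

Lemma pick3 (T : Type) (a b c j1 j2 : T) : a <> b -> a <> c -> b <> c ->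
  exists i, (i = a \/ i = b \/ i = c) /\ i <> j1 /\ i <> j2.
Proof.
  intros. destruct (classic (a = j1 \/ a = j2)).
  - destruct (classic (b = j1 \/ b = j2)).
    + exists c. split; auto. destruct H2, H3; subst; split; congruence.
    + exists b. split; auto.
  - exists a. split; auto.
Qed.

Lemma core (G : Group) Gam gam (HN : forall n, normal_subgroup (Gam n))
  (Hdec : forall n g, Gam (S n) g -> Gam n g)
  (Hres : forall g, (forall n, Gam n g) -> g = gone G)
  (Hgam : forall k, 1 <= k -> Gam (k - 1) (gam k) /\ ~ Gam k (gam k))
  (M : G -> Prop) (Hind : independence_set Gam (Xplus Gam gam) (Xminus Gam gam) M)
  (s1 s2 s3 s4 s5 s6 : G) rest :
  let L := s1 :: s2 :: s3 :: s4 :: s5 :: s6 :: rest in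
  (forall s, In s L -> M s) -> NoDup L -> False.
Proof.
  intros L Hl Hnd.
  assert (Hd : s1 <> s2 /\ s3 <> s4 /\ s3 <> s5 /\ s4 <> s5 /\ s1 <> s3 /\ s1 <> s4 /\ s1 <> s5
            /\ s2 <> s3 /\ s2 <> s4 /\ s2 <> s5).
  { unfold L in Hnd.
    apply NoDup_cons_iff in Hnd as [H1 Hnd]. apply NoDup_cons_iff in Hnd as [H2 Hnd].
    apply NoDup_cons_iff in Hnd as [H3 Hnd]. apply NoDup_cons_iff in Hnd as [H4 Hnd].
    simpl in *. repeat split; intro; subst; tauto. }
  destruct Hd as [d12 [d34 [d35 [d45 [d13 [d14 [d15 [d23 [d24 d25]]]]]]]]].
  assert (I1 : In s1 L) by (unfold L; simpl; tauto).
  assert (I2 : In s2 L) by (unfold L; simpl; tauto).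
  assert (I3 : In s3 L) by (unfold L; simpl; tauto).
  assert (I4 : In s4 L) by (unfold L; simpl; tauto).
  assert (I5 : In s5 L) by (unfold L; simpl; tauto).
  assert (Hex : exists n, exists u v, In u L /\ In v L /\ ~ E G Gam n (ginv G u) (ginv G v)).
  { assert (Hne : gmul G (ginv G (ginv G s1)) (ginv G s2) <> gone G).
    { rewrite inv_inv. intro H. apply d12. apply eq_of_mulV; auto. }
    destruct (not_all_ex_not _ _ (fun H => Hne (Hres _ H))) as [n Hn].
    exists n, s1, s2. auto. }
  destruct (least_ex _ Hex) as [m [[p [q [Ip [Iq Hpq]]]] Hmin0]].
  assert (Hmin : forall n, n < m -> forall u v, In u L -> In v L -> E G Gam n (ginv G u) (ginv G v)).
  { intros n Hn u v Iu Iv. apply NNPP. intro H. apply (Hmin0 n Hn). exists u, v; auto. }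
  clear Hmin0 Hex.
  destruct (classic (exists u v, In u L /\ In v L /\ u <> v /\ E G Gam m (ginv G u) (ginv G v)))
    as [[u [v [Iu [Iv [Huv Emuv]]]]] | Hno].
  -
    assert (Hb : exists b, In b L /\ ~ E G Gam m (ginv G u) (ginv G b)).
    { destruct (classic (E G Gam m (ginv G u) (ginv G p))) as [H|H]; [|eauto].
      exists q; split; auto. intro H'. apply Hpq.
      apply (E_trans G Gam HN m _ (ginv G u)); auto. apply E_sym; auto. }
    destruct Hb as [b [Ib Hub]].
    assert (dbu : b <> u) by (intro; subst; apply Hub; apply E_refl; auto).
    assert (dbv : b <> v) by (intro; subst; apply Hub; auto).
    set (P := 1 <= m /\ E G Gam m (gmul G (ginv G b) (gam m)) (ginv G u)).
    set (omega := fun s => if dec (s = u) then true else if dec (s = v) then false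
                           else if dec P then false else true).
    destruct (Hind [u; v; b] omega) as [x [Hc Hx]].
    { discriminate. }
    { intros s Hs. apply Hl. simpl in Hs. destruct Hs as [<-|[<-|[<-|[]]]]; auto. }
    pose proof (Hx u ltac:(simpl; tauto)) as Hu.
    pose proof (Hx v ltac:(simpl; tauto)) as Hv.
    pose proof (Hx b ltac:(simpl; tauto)) as Hbx.
    unfold omega in Hu, Hv, Hbx.
    rewrite dec_t in Hu by auto.
    rewrite dec_f in Hv by auto. rewrite dec_t in Hv by auto.
    rewrite dec_f in Hbx by auto. rewrite dec_f in Hbx by auto.
    apply plus_iff in Hu. destruct Hu as [k [Hk Hu]].
    destruct Hv as [Hv _]. rewrite plus_iff in Hv.
    assert (Hmk : m < k).
    { destruct (le_lt_dec k m) as [Hle|]; auto. exfalso. apply Hv. exists k; split; auto.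
      apply (transfer G Gam HN k (ginv G u)); auto.
      apply (E_mono G Gam Hdec k m); auto. }
    assert (Hxm : E G Gam m (ginv G u) (x m)) by (eapply plus_high; eauto).
    destruct (sign_lemma G Gam gam HN Hdec Hgam x m (ginv G b) (ginv G u) Hc
       ltac:(intros n Hn; apply Hmin; auto) ltac:(intro H; apply Hub, E_sym; auto) Hxm) as [Hs Hid].
    destruct (dec P) eqn:HP; simpl in Hbx.
    + unfold dec in HP. destruct (excluded_middle_informative P) as [HP'|]; [|discriminate].
      destruct Hbx as [Hbx _]. apply Hbx. apply plus_iff. apply Hs. exact HP'.
    + unfold dec in HP. destruct (excluded_middle_informative P) as [|HP']; [discriminate|].
      apply HP'. apply Hs. apply plus_iff. exact Hbx.
  -
    assert (Hdist : forall u v, In u L -> In v L -> E G Gam m (ginv G u) (ginv G v) -> u = v).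
    { intros u v Iu Iv H. apply NNPP. intro Hne. apply Hno. exists u, v; auto. }
    set (R := fun t j => 1 <= m /\ E G Gam m (gmul G (ginv G t) (gam m)) (ginv G j)).
    assert (Hreal : forall a t1 t2, In a L -> In t1 L -> In t2 L -> t1 <> a -> t2 <> a -> t1 <> t2 ->
      exists j, In j L /\ forall t, In t L -> t <> j -> (t = a -> ~ R t j) /\ (t <> a -> R t j)).
    { intros a t1 t2 Ia It1 It2 d1 d2 d12'.
      set (omega := fun s => if dec (s = a) then false else true).
      destruct (Hind L omega) as [x [Hc Hx]]; [discriminate|auto|].
      assert (Hplus : forall t, In t L -> t <> a -> Xplus Gam gam (translate t x)).
      { intros t It Hta. pose proof (Hx t It) as H. unfold omega in H.
        rewrite dec_f in H by auto. exact H. }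
      assert (Hmin' : ~ Xplus Gam gam (translate a x)).
      { pose proof (Hx a Ia) as H. unfold omega in H. rewrite dec_t in H by auto. apply H. }
      assert (Hj : exists j, In j L /\ E G Gam m (ginv G j) (x m)).
      { apply NNPP. intro Hnj.
        assert (Hlev : forall t, In t L -> t <> a -> E G Gam m (gmul G (ginv G t) (gam m)) (x m)).
        { intros t It Hta. destruct (proj1 (plus_iff G Gam gam t x) (Hplus t It Hta)) as [k [Hk H]].
          destruct (lt_eq_lt_dec k m) as [[Hlt|Heq]|Hgt].
          - exfalso. apply Hmin'. apply plus_iff. exists k; split; auto.
            apply (transfer G Gam HN k (ginv G t)); auto.
          - subst k; exact H.
          - exfalso. apply Hnj. exists t; split; auto. eapply plus_high; eauto. }
        apply d12'. apply Hdist; auto. apply (E_rmul_inv G Gam HN m _ _ (gam m)).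
        apply (E_trans G Gam HN m _ (x m)); auto. apply E_sym; auto. }
      destruct Hj as [j [Ij Hjx]]. exists j; split; auto. intros t It Htj.
      destruct (sign_lemma G Gam gam HN Hdec Hgam x m (ginv G t) (ginv G j) Hc
         ltac:(intros n Hn; apply Hmin; auto) ltac:(intro H; apply Htj, Hdist; auto) Hjx) as [Hs _].
      split.
      - intros -> HR. apply Hmin'. apply plus_iff. apply Hs. exact HR.
      - intro Hta. apply Hs. apply plus_iff. apply Hplus; auto. }
    destruct (Hreal s1 s3 s4 I1 I3 I4 (fun e => d13 (eq_sym e)) (fun e => d14 (eq_sym e)) d34) as [j1 [Ij1 Hj1]].
    destruct (Hreal s2 s3 s4 I2 I3 I4 (fun e => d23 (eq_sym e)) (fun e => d24 (eq_sym e)) d34) as [j2 [Ij2 Hj2]].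
    destruct (pick3 _ s3 s4 s5 j1 j2 d34 d35 d45) as [i [Hi [Hij1 Hij2]]].
    assert (Ii : In i L /\ i <> s1 /\ i <> s2) by (destruct Hi as [ -> | [ -> | -> ] ]; auto).
    destruct Ii as [Ii [Hi1 Hi2]].
    assert (R1 := proj2 (Hj1 i Ii Hij1) Hi1).
    assert (R2 := proj2 (Hj2 i Ii Hij2) Hi2).
    assert (j1 = j2).
    { apply Hdist; auto. destruct R1 as [_ R1], R2 as [_ R2].
      apply (E_trans G Gam HN m _ (gmul G (ginv G i) (gam m))); auto. apply E_sym; auto. }
    subst j2. destruct (classic (j1 = s1)) as [->|Hn1].
    + apply (proj1 (Hj2 s2 I2 (fun e => d12 (eq_sym e))) eq_refl).
      apply (proj2 (Hj1 s2 I2 (fun e => d12 (eq_sym e)))). auto.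
    + apply (proj1 (Hj1 s1 I1 (fun e => Hn1 (eq_sym e))) eq_refl).
      apply (proj2 (Hj2 s1 I1 (fun e => Hn1 (eq_sym e)))). auto.
Qed.

Theorem lemma4p2 (G : Group) (Gam : nat -> G -> Prop) (gam : nat -> G) :
  countably_infinite G ->
  residually_finite G ->
  (forall n, normal_subgroup (Gam n)) ->
  (forall n, finite_index (Gam n)) ->
  (forall n g, Gam (S n) g -> Gam n g) ->
  (forall n, exists g, Gam n g /\ ~ Gam (S n) g) ->
  (forall g, (forall n, Gam n g) -> g = gone G) ->
  (forall k, 1 <= k -> Gam (k - 1) (gam k) /\ ~ Gam k (gam k)) ->
  forall M : G -> Prop,
    independence_set Gam (Xplus Gam gam) (Xminus Gam gam) M ->
    card_le M 5.
Proof.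
  intros _ _ HN _ Hdec _ Hres Hgam M Hind l Hnd Hl.
  destruct (le_lt_dec (length l) 5) as [H|H]; auto. exfalso.
  destruct l as [|s1 [|s2 [|s3 [|s4 [|s5 [|s6 rest]]]]]]; simpl in H; try lia.
  exact (core G Gam gam HN Hdec Hres Hgam M Hind s1 s2 s3 s4 s5 s6 rest Hl Hnd).
Qed.
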